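(* Let $X$ be a Banach space, $F:\mathbb{R}^{n+1}_+\to X$ strongly measurable, $q\in(0,\infty)$ and $\rho>1$. Define the stopping time $\tau(x):=\sup\{\tau>0:A(F|\tau)(x)\le\rho\,C_q(F)(x)\}$. Then for every ball $B\subset\mathbb{R}^n$, $$|B\cap\{\tau>r(B)\}|\ge(1-\rho^{-q})|B|.$$
   Context: $\Gamma^h(x):=\{(y,t)\in\mathbb{R}^{n+1}_+:|y-x|<t<h\}$. Gauss norm: $H=L^2(\mathbb{R}^{n+1}_+,\,dy\,dt/t^{n+1})$, $(\gamma_j)$ independent complex standard Gaussians; for $T\in\mathcal{L}(H,X)$, $\|T\|_{\gamma(H,X)}:=\|\sum_j\gamma_jTe_j\|_{L^2(\Omega;X)}$ when this converges for an orthonormal basis $(e_j)$. For strongly measurable weakly-$L^2$ $\Phi:\mathbb{R}^{n+1}_+\to X$, $I_\Phi h:=$ Pettis-$\int\Phi h\,dy\,dt/t^{n+1}$, $\|\Phi\|_{\gamma(X)}:=\|I_\Phi\|_{\gamma(H,X)}$, and $\infty$ otherwise. $A(F|h)(x):=\|F1_{\Gamma^h(x)}\|_{\gamma(X)}$, and $C_q(F)(x):=\sup_{B\ni x}\big(\frac1{|B|}\int_BA(F|r(B))(y)^q\,dy\big)^{1/q}$ over open balls $B\ni x$ of radius $r(B)$. *)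

(* Defs.v *)
From HB Require Import structures.
From mathcomp Require Import all_boot all_order all_algebra.
From mathcomp Require Import all_classical all_reals all_analysis.
From mathcomp Require Import complex.

Set Implicit Arguments.
Unset Strict Implicit.
Unset Printing Implicit Defensive.

Import Order.TTheory GRing.Theory Num.Theory.
Import numFieldNormedType.Exports.

Local Open Scope classical_set_scope.
Local Open Scope ring_scope.

Definition cre {R : realType} (z : R[i]) : R := complex.Re z.
Definition cim {R : realType} (z : R[i]) : R := complex.Im z.
Definition cabs {R : realType} (z : R[i]) : R := Num.sqrt (cre z ^+ 2 + cim z ^+ 2).
(* the norm of a (complex) Banach space, as a real number
   (MathComp-Analysis stores it in the scalar field R[i], with zero
    imaginary part) *)
Definition xnorm {R : realType} {X : normedModType R[i]} (x : X) : R := cre `|x|.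

Definition euc_norm {R : realType} {I : finType} (x : I -> R) : R :=
  Num.sqrt (\sum_i x i ^+ 2).

Definition box {R : realType} {I : finType} (a b : I -> R) : set (I -> R) :=
  [set x | forall i, a i <= x i <= b i].

Definition box_vol {R : realType} {I : finType} (a b : I -> R) : R :=
  \prod_i (b i - a i).

Definition lebout {R : realType} {I : finType} (E : set (I -> R)) : \bar R :=
  ereal_inf [set s : \bar R | exists (a b : nat -> I -> R),
    [/\ (forall k i, a k i <= b k i),
        E `<=` \bigcup_k box (a k) (b k) &
        s = (\sum_(0 <= k <oo) (box_vol (a k) (b k))%:E)%E]].

Definition leb_meas {R : realType} {I : finType} (E : set (I -> R)) : Prop :=
  forall A : set (I -> R), lebout A = (lebout (A `&` E) + lebout (A `&` ~` E))%E.

(* Lebesgue integral of a nonnegative function on R^I (layer-cake formula) *)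
Definition lint {R : realType} {I : finType} (g : (I -> R) -> \bar R) : \bar R :=
  (\int[@lebesgue_measure R]_(s in [set s : R | (0 <= s)%R])
      lebout [set x | (s%:E < g x)%E])%E.

(* The upper half space R^{n+1}_+ = R^n x (0,oo), with measure             *)
(* dy dt / t^{n+1}.  A point of R^{n+1} is z : option 'I_n -> R,            *)
(* with y = (z (Some i))_i and t = z None.  Functions on the half space     *)
(* are written curried: (y, t) |-> f y t.                                   *)

Definition hs_y {R : realType} {n : nat} (z : option 'I_n -> R) : 'I_n -> R :=
  fun i => z (Some i).

Definition hs_setmeas {R : realType} (n : nat) (S : ('I_n -> R) -> R -> Prop) :=
  leb_meas [set z : option 'I_n -> R | 0 < z None /\ S (hs_y z) (z None)].

Definition hs_rmeas {R : realType} (n : nat) (f : ('I_n -> R) -> R -> R) :=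
  forall s : R, hs_setmeas (fun y t => s < f y t).

Definition hs_cmeas {R : realType} (n : nat) (f : ('I_n -> R) -> R -> R[i]) :=
  hs_rmeas (fun y t => cre (f y t)) /\ hs_rmeas (fun y t => cim (f y t)).

Definition hsint {R : realType} (n : nat) (g : ('I_n -> R) -> R -> \bar R) : \bar R :=
  lint (fun z : option 'I_n -> R =>
    if 0 < z None then (g (hs_y z) (z None) * ((z None) ^- n.+1)%:E)%E else 0%E).

Definition hsint_r {R : realType} (n : nat) (f : ('I_n -> R) -> R -> R) : R :=
  fine (hsint (fun y t => (Num.max (f y t) 0)%:E)) -
  fine (hsint (fun y t => (Num.max (- f y t) 0)%:E)).

Definition hsint_c {R : realType} (n : nat) (f : ('I_n -> R) -> R -> R[i]) : R[i] :=
  Complex (hsint_r (fun y t => cre (f y t))) (hsint_r (fun y t => cim (f y t))).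

Definition L2H {R : realType} (n : nat) (h : ('I_n -> R) -> R -> R[i]) : Prop :=
  hs_cmeas h /\ (hsint (fun y t => ((cabs (h y t)) ^+ 2)%:E) < +oo)%E.

Definition hinner {R : realType} (n : nat) (h1 h2 : ('I_n -> R) -> R -> R[i]) : R[i] :=
  hsint_c (fun y t => h1 y t * (h2 y t)^*).

(* orthonormal basis (e_j)_j of H (H is separable and infinite dimensional) *)
Definition ONB {R : realType} (n : nat) (e : nat -> ('I_n -> R) -> R -> R[i]) : Prop :=
  [/\ (forall j, L2H (e j)),
      (forall i j, hinner (e i) (e j) = (i == j)%:R) &
      (forall h, L2H h -> (forall j, hinner h (e j) = 0) ->
         hsint (fun y t => ((cabs (h y t)) ^+ 2)%:E) = 0%E)].

Definition is_dual {R : realType} {X : normedModType R[i]} (f : X -> R[i]) : Prop :=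
  (forall (a : R[i]) (x y : X), f (a *: x + y) = a * f x + f y) /\ continuous (f : X -> (R[i] : numFieldType)).

Definition hs_simple {R : realType} {X : normedModType R[i]} (n : nat)
  (s : ('I_n -> R) -> R -> X) : Prop :=
  finite_set [set x : X | exists y t, 0 < t /\ x = s y t] /\
  (forall x : X, hs_setmeas (fun y t => s y t = x)).

Definition strongly_meas {R : realType} {X : normedModType R[i]} (n : nat)
  (F : ('I_n -> R) -> R -> X) : Prop :=
  exists s : nat -> ('I_n -> R) -> R -> X,
    (forall k, hs_simple (s k)) /\
    (forall y t, 0 < t -> s k y t @[k --> \oo] --> F y t).

Definition weakly_L2 {R : realType} {X : normedModType R[i]} (n : nat)
  (F : ('I_n -> R) -> R -> X) : Prop :=
  forall f : X -> R[i], is_dual f -> L2H (fun y t => f (F y t)).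

Definition pettis {R : realType} {X : normedModType R[i]} (n : nat)
  (Phi : ('I_n -> R) -> R -> X) (h : ('I_n -> R) -> R -> R[i]) (x : X) : Prop :=
  forall f : X -> R[i], is_dual f -> hsint_c (fun y t => f (Phi y t) * h y t) = f x.

Definition iid_std_gaussian {R : realType} {d : measure_display} {Omega : measurableType d}
  (P : probability Omega R) (g : nat -> Omega -> R) : Prop :=
  [/\ (forall k, measurable_fun setT (g k)),
      (forall k (A : set R), measurable A ->
         P (g k @^-1` A) = normal_prob 0 1 A) &
      (forall (s : seq nat) (A : nat -> set R), uniq s ->
         (forall k, measurable (A k)) ->
         P (\bigcap_(k in [set k | k \in s]) (g k @^-1` A k)) =
         (\big[*%E/1%E]_(k <- s) P (g k @^-1` A k))%E)].

(* gamma_j = (g_{2j} + i g_{2j+1}) / sqrt 2 : independent standard complex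
   Gaussians *)
Definition cgauss {R : realType} {Omega : Type} (g : nat -> Omega -> R) (j : nat)
  (w : Omega) : R[i] :=
  (real_complex R (g j.*2 w) + 'i * real_complex R (g j.*2.+1 w)) / real_complex R (Num.sqrt (2 : R)).

Definition gsum {R : realType} {X : normedModType R[i]} {Omega : Type}
  (g : nat -> Omega -> R) (x : nat -> X) (N : nat) (w : Omega) : X :=
  \sum_(j < N) cgauss g j w *: x j.

Definition EnormSq {R : realType} {X : normedModType R[i]} {d : measure_display}
  {Omega : measurableType d} (P : probability Omega R) (Y : Omega -> X) : \bar R :=
  (\int[P]_w ((xnorm (Y w)) ^+ 2)%:E)%E.

(* The possible values of ||Phi||_{gamma(X)} = ||I_Phi||_{gamma(H,X)}:
   Phi is strongly measurable, weakly L^2, the Pettis integrals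
   I_Phi h exist in X for all h in H, and for an orthonormal basis (e_j)
   and independent standard complex Gaussians (gamma_j), the series
   \sum_j gamma_j I_Phi e_j converges in L^2(Omega;X) (i.e. its partial sums
   are Cauchy in L^2(Omega;X), X being complete), v being the L^2(Omega;X)
   norm of its sum. *)
Definition gamma_values {R : realType} {X : completeNormedModType R[i]} (n : nat)
  (Phi : ('I_n -> R) -> R -> X) : set R :=
  [set v : R |
    [/\ strongly_meas Phi, weakly_L2 Phi,
        (forall h, L2H h -> exists x : X, pettis Phi h x) &
        exists (d : measure_display) (Omega : measurableType d)
               (P : probability Omega R) (g : nat -> Omega -> R)
               (e : nat -> ('I_n -> R) -> R -> R[i]) (x : nat -> X),
          [/\ iid_std_gaussian P g, ONB e,
              (forall j, pettis Phi (e j) (x j)),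
              (forall eps : R, 0 < eps -> exists N0 : nat, forall N M : nat,
                  (N0 <= N)%N -> (N0 <= M)%N ->
                  (EnormSq P (fun w => (gsum g x N w - gsum g x M w)%R) < eps%:E)%E) &
              (fun N => Num.sqrt (fine (EnormSq P (gsum g x N)))) @ \oo --> v]]].

(* ||Phi||_{gamma(X)} (+oo when Phi does not define a gamma-radonifying
   operator); the value does not depend on the choices of basis and
   Gaussian sequence, so the infimum is the common value. *)
Definition gamma_norm {R : realType} {X : completeNormedModType R[i]} (n : nat)
  (Phi : ('I_n -> R) -> R -> X) : \bar R :=
  ereal_inf [set v%:E | v in gamma_values Phi].

Definition cone {R : realType} (n : nat) (h : R) (x : 'I_n -> R) :
  ('I_n -> R) -> R -> Prop :=
  fun y t => euc_norm (fun i => y i - x i) < t /\ t < h.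

Definition Afun {R : realType} {X : completeNormedModType R[i]} (n : nat)
  (F : ('I_n -> R) -> R -> X) (h : R) (x : 'I_n -> R) : \bar R :=
  gamma_norm (fun y t => if `[< cone h x y t >] then F y t else 0).

Definition eball {R : realType} (n : nat) (c : 'I_n -> R) (r : R) : set ('I_n -> R) :=
  [set y | euc_norm (fun i => y i - c i) < r].

Definition Cq {R : realType} {X : completeNormedModType R[i]} (n : nat)
  (q : R) (F : ('I_n -> R) -> R -> X) (x : 'I_n -> R) : \bar R :=
  ereal_sup [set s : \bar R | exists (c : 'I_n -> R) (r : R),
    [/\ 0 < r, eball c r x &
        s = poweR ((fine (lebout (eball c r)))^-1%:E *
                   lint (fun y => if `[< eball c r y >]
                                  then poweR (Afun F r y) q else 0))%E q^-1]].

Definition stop_time {R : realType} {X : completeNormedModType R[i]} (n : nat)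
  (q rho : R) (F : ('I_n -> R) -> R -> X) (x : 'I_n -> R) : \bar R :=
  ereal_sup [set s%:E | s in [set s : R |
    0 < s /\ (Afun F s x <= rho%:E * Cq q F x)%E]].

(* Main.v *)
Require Import Defs.
From HB Require Import structures.
From mathcomp Require Import all_boot all_order all_algebra.
From mathcomp Require Import all_classical all_reals all_analysis.
From mathcomp Require Import complex.
From mathcomp Require Import ring lra.
Import Order.TTheory GRing.Theory Num.Theory.
Import numFieldNormedType.Exports.
Local Open Scope classical_set_scope.
Local Open Scope ring_scope.

Section lebout_props.
Context {R : realType} {I : finType}.
Local Open Scope ereal_scope.

Lemma box_vol_ge0 (a b : I -> R) : (forall i, (a i <= b i)%R) -> (0 <= box_vol a b)%R.
Proof. by move=> ab; apply: prodr_ge0 => i _; rewrite subr_ge0. Qed.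

Lemma lebout_ge0 (E : set (I -> R)) : 0 <= lebout E.
Proof.
apply: le_ereal_inf_tmp => _ [a [b [ab _ ->]]].
by apply: nneseries_ge0 => k _; rewrite lee_fin box_vol_ge0.
Qed.

Lemma le_lebout (A B : set (I -> R)) : A `<=` B -> lebout A <= lebout B.
Proof.
move=> AB; apply: ereal_inf_le_tmp => _ [a [b [ab BC ->]]].
by exists a, b; split => //; apply: subset_trans BC.
Qed.

Lemma lebout_sigma_sub (A : nat -> set (I -> R)) :
  lebout (\bigcup_n A n) <= \sum_(i <oo) lebout (A i).
Proof.
have [[i ioo]|] := pselect (exists i, lebout (A i) = +oo).
  by rewrite (nneseries_pinfty _ _ ioo) ?leey// => n _; exact: lebout_ge0.
rewrite -forallNE => Aoo.
apply/lee_addgt0Pr => e e0.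
rewrite (le_trans _ (epsilon_trick _ _ _))//; last 2 first.
  by move=> n; exact: lebout_ge0.
  exact: ltW.
pose P n (G : (nat -> I -> R) * (nat -> I -> R)) :=
  [/\ (forall k i, G.1 k i <= G.2 k i)%R, A n `<=` \bigcup_k box (G.1 k) (G.2 k) &
   \sum_(k <oo) (box_vol (G.1 k) (G.2 k))%:E <= lebout (A n) + (e / (2 ^ n.+1)%:R)%:E].
have [G PG] : {G : nat -> (nat -> I -> R) * (nat -> I -> R) & forall n, P n (G n)}.
  apply: (@choice _ _ P) => n; rewrite /P /lebout.
  set S := (X in ereal_inf X); move infS : (ereal_inf S) => iS.
  case: iS infS => [r Sr|Soo|Soo].
  - have en1 : (0 < e / (2 ^ n.+1)%:R)%R by apply: divr_gt0.
    have /(lb_ereal_inf_adherent en1) : ereal_inf S \is a fin_num by rewrite Sr.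
    move=> [x [a [b [ab AnB ->]]] xS].
    by exists (a, b); split => //; rewrite -Sr; exact/ltW.
  - by have := Aoo n; rewrite /lebout Soo.
  - suff : lbound S 0 by move/le_ereal_inf_tmp; rewrite Soo.
    by move=> /= _ [a [b [ab _ ->]]]; apply: nneseries_ge0 => k _; rewrite lee_fin box_vol_ge0.
pose a2 (p : nat * nat) := (G p.1).1 p.2.
pose b2 (p : nat * nat) := (G p.1).2 p.2.
pose v2 (p : nat * nat) := (box_vol (a2 p) (b2 p))%:E.
have v2_ge0 p : 0 <= v2 p.
  by rewrite lee_fin box_vol_ge0// => i; case: (PG p.1) => + _ _; apply.
apply: (@le_trans _ _ (\esum_(i in setT) v2 i)).
  rewrite /lebout; apply: ereal_inf_lbound => /=.
  have /card_esym/ppcard_eqP[f] := card_nat2.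
  exists (a2 \o f), (b2 \o f); split.
  - by move=> k i; rewrite /a2 /b2 /=; case: (PG (f k).1) => + _ _; apply.
  - move=> t [i _ Ait]; case: (PG i) => _ /(_ t Ait) [j _ Bijt] _.
    exists (f^-1%FUN (i, j)) => //=.
    by rewrite /a2 /b2 invK ?inE.
  rewrite [RHS](_ : _ = \sum_(k <oo) v2 (f k))//.
  rewrite -(esum_pred_image v2 _ xpredT) ?[fun=> _]set_true//.
  congr esum; apply/seteqP; split => // p _.
  by exists (f^-1%FUN p) => //; rewrite invK ?inE.
rewrite (_ : esum _ _ = \sum_(i <oo) \sum_(j <oo ) v2 (i, j)); last first.
  pose J : nat -> set (nat * nat) := fun i => [set (i, j) | j in setT].
  rewrite (_ : setT = \bigcup_k J k); last first.
    by rewrite predeqE => -[a b]; split => // _; exists a => //; exists b.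
  rewrite esum_bigcupT /=; last 2 first.
    - apply/trivIsetP => i j _ _ ij.
      rewrite predeqE => -[n m] /=; split => //= -[] [_] _ [<-{n} _].
      by move=> [m' _] [] /esym/eqP; rewrite (negbTE ij).
    - by move=> /= [n m].
  rewrite -(image_id [set: nat]) -fun_true esum_pred_image//; last first.
    by move=> n _; exact: esum_ge0.
  apply: eq_eseriesr => /= j _.
  rewrite -(esum_pred_image v2 (pair j) predT)//=; last first.
    by move=> ? ? _ _; exact: (@can_inj _ _ _ snd).
  by congr esum; rewrite predeqE => -[a b]; split; move=> [i _ <-]; exists i.
apply: lee_lim.
- apply: is_cvg_nneseries => n *.
  by apply: nneseries_ge0 => m *; exact: (v2_ge0 (n, m)).
- by apply: is_cvg_nneseries => n *; apply: adde_ge0 => //; [exact: lebout_ge0|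
    rewrite lee_fin; apply: divr_ge0 => //; exact: ltW].
- by near=> n; apply: lee_sum => i _; case: (PG i).
Unshelve. all: by end_near. Qed.


Lemma lebout_set0 (i0 : I) : lebout (@set0 (I -> R)) = 0.
Proof.
apply/eqP; rewrite eq_le lebout_ge0 andbT; apply: ereal_inf_lbound.
exists (fun _ _ => 0%R), (fun _ _ => 0%R); split => //.
by rewrite eseries0// => k _ _; rewrite /box_vol (bigD1 i0)//= subrr mul0r.
Qed.

Lemma lebout_subU (i0 : I) (A B : set (I -> R)) :
  lebout (A `|` B) <= lebout A + lebout B.
Proof.
pose S k := if k == 0%N then A else if k == 1%N then B else set0.
apply: (le_trans (@le_lebout _ (\bigcup_k S k) _)).
  by move=> x [Ax|Bx]; [exists 0%N|exists 1%N].
apply: (le_trans (lebout_sigma_sub S)).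
rewrite (@nneseries_split _ _ 0 2); last by move=> k _; exact: lebout_ge0.
rewrite [X in _ + X]eseries0; last first.
  by move=> k k2 _; rewrite /S; case: k k2 => [|[|k]]//= _; exact: lebout_set0.
by rewrite adde0 /= big_nat_recr//= big_nat_recr//= big_geq// add0e.
Qed.

End lebout_props.

Section integral_nm.
Local Open Scope ereal_scope.
Context d (T : measurableType d) (R : realType) (mu : {measure set T -> \bar R}).

Lemma le_integral_nm (D : set T) (f g : T -> \bar R) :
  (forall x, D x -> 0 <= f x) -> (forall x, D x -> f x <= g x) ->
  \int[mu]_(x in D) f x <= \int[mu]_(x in D) g x.
Proof.
move=> f0 fg.
have g0 : forall x, D x -> 0 <= g x by move=> x Dx; exact: le_trans (f0 x Dx) (fg x Dx).
rewrite (ge0_integralE mu f0) (ge0_integralE mu g0).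
apply: ereal_sup_le => _ [h hf <-]; exists h => // x.
exact: le_trans (hf x) (lee_restrict fg x).
Qed.

End integral_nm.

Section cheb.
Local Open Scope ereal_scope.
Context {R : realType} {I : finType}.

Lemma lebout_cheb (g : (I -> R) -> \bar R) (l : R) : (0 < l)%R ->
  l%:E * lebout [set x | l%:E < g x] <= lint g.
Proof.
move=> l0; rewrite /lint.
set phi := fun s : R => lebout [set x | s%:E < g x].
have phi0 s : 0 <= phi s by exact: lebout_ge0.
apply: (@le_trans _ _ (\int[@lebesgue_measure R]_(s in `[0%R, l]) phi s)).
  apply: (@le_trans _ _ (\int[@lebesgue_measure R]_(s in `[0%R, l]) (cst (phi l)) s)).
    rewrite integral_cst//= lebesgue_measure_itv/= lte_fin l0 sube0 muleC.
    by [].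
  apply: le_integral_nm => s /=; first by move=> _; exact: phi0.
  rewrite in_itv/= => /andP[s0 sl]; apply: le_lebout => x /= lx.
  by apply: le_lt_trans lx; rewrite lee_fin.
rewrite integral_mkcond [X in _ <= X]integral_mkcond.
apply: le_integral_nm => s _; first exact: erestrict_ge0.
rewrite /patch; case: ifPn => //.
rewrite inE /= in_itv/= => /andP[s0 _].
  by rewrite ifT// inE.
by move=> _; case: ifPn => // _; exact: phi0.
Qed.

End cheb.

Section more.
Local Open Scope ereal_scope.
Context {R : realType} {I : finType}.

Lemma lebout_lint0 (g : (I -> R) -> \bar R) : lint g = 0 ->
  lebout [set x | 0 < g x] = 0.
Proof.
move=> g0; apply/eqP; rewrite eq_le lebout_ge0 andbT.
apply: (le_trans (@le_lebout _ _ _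
  (\bigcup_k [set x | ((k.+1%:R)^-1)%:E < g x]) _)).
  move=> x /= gx; case E: (g x) => [a| |] in gx *.
  - have a0 : (0 < a)%R by rewrite -lte_fin.
    exists (Num.bound a^-1) => //=; rewrite E lte_fin.
    rewrite invf_plt ?posrE//.
    apply: lt_le_trans (archi_boundP _) _; first by rewrite invr_ge0 ltW.
    by rewrite ler_nat.
  - by exists 0%N => //=; rewrite E ltey.
  - by [].
apply: (le_trans (lebout_sigma_sub _)).
rewrite eseries0 // => k _ _.
apply/eqP; rewrite eq_le lebout_ge0 andbT.
have k0 : (0 < (k.+1%:R)^-1 :> R)%R by rewrite invr_gt0.
have := @lebout_cheb _ _ g _ k0; rewrite g0.
by rewrite -lee_pdivlMl// mule0.
Qed.

End more.

Lemma lebout_I0 {R : realType} (E : set ('I_0 -> R)) : lebout E = +oo%E.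
Proof.
have H : forall a b : nat -> 'I_0 -> R,
    (\sum_(k <oo) (box_vol (a k) (b k))%:E = +oo)%E.
  move=> a b.
  set S := (X in X = _).
  have SN : forall N : nat, ((N%:R)%:E <= S)%E.
    move=> N; apply: le_trans (nneseries_lim_ge N _); last first.
      by move=> *; rewrite /box_vol big_ord0 lee_fin.
    rewrite (eq_bigr (fun=> 1%:E)); last by move=> i _; rewrite /box_vol big_ord0.
    by rewrite sumEFin sumr_const_nat subn0.
  case: S SN => [s|//|] SN.
  - have := SN (Num.bound `|s|); rewrite lee_fin => h.
    have := lt_le_trans (le_lt_trans (ler_norm s) (archi_boundP (normr_ge0 s))) h.
    by rewrite ltxx.
  - by have := SN 0%N.
apply/eqP; rewrite eq_le leey; apply: le_ereal_inf_tmp => _ [a [b [_ _ ->]]].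
by rewrite H.
Qed.

Section balls.
Local Open Scope ereal_scope.
Context {R : realType} {n : nat}.
Implicit Types (c : 'I_n -> R) (r : R).

Lemma enorm_lt (x : 'I_n -> R) r : (0 < r)%R ->
  (euc_norm x < r)%R = (\sum_i x i ^+ 2 < r ^+ 2)%R.
Proof.
move=> r0; rewrite /euc_norm -{1}(ger0_norm (ltW r0)) -sqrtr_sqr ltr_sqrt// exprn_gt0//.
Qed.

Lemma coord_le (x : 'I_n -> R) i : (`|x i| <= euc_norm x)%R.
Proof.
rewrite /euc_norm -sqrtr_sqr ler_sqrt ?sumr_ge0// => [|j _]; last exact: sqr_ge0.
by rewrite (bigD1 i)//= lerDl sumr_ge0// => j _; exact: sqr_ge0.
Qed.

Lemma lebout_ball_fin (i0 : 'I_n) c r : (0 < r)%R -> lebout (eball c r) < +oo.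
Proof.
move=> r0.
pose a k i := if k == 0%N then (c i - r)%R else 0%R.
pose b k i := if k == 0%N then (c i + r)%R else 0%R.
apply: (le_lt_trans (ereal_inf_lbound _)).
  exists a, b; split.
  - move=> [|k] i; rewrite /a /b //=.
    by rewrite lerD2l -subr_ge0 opprK -mulr2n mulrn_wge0// ltW.
  - move=> y /= yB; exists 0%N => // i; rewrite /a /b /=.
    have := le_lt_trans (coord_le (fun j => (y j - c j)%R) i) yB.
    rewrite ltr_norml => /andP[h1 h2].
    by apply/andP; split; lra.
  reflexivity.
rewrite (@nneseries_split _ _ 0 1); last first.
  move=> [|k] _; rewrite lee_fin box_vol_ge0// => i; rewrite /a /b//=.
  by rewrite lerD2l -subr_ge0 opprK -mulr2n mulrn_wge0// ltW.
rewrite eseries0; last by move=> [|k]//= _ _; rewrite /box_vol (bigD1 i0)//= /a /b /= subrr mul0r.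
by rewrite adde0 big_nat1 ltey.
Qed.


Lemma lebout_ball_scale c r (l : R) : (0 < r)%R -> (0 < l)%R ->
  lebout (eball c (l * r)) <= (l ^+ n)%:E * lebout (eball c r).
Proof.
move=> r0 l0; have ln0 : (0 < l ^+ n)%R by rewrite exprn_gt0.
rewrite -lee_pdivrMl//; apply: le_ereal_inf_tmp => _ [a [b [ab cov ->]]].
rewrite lee_pdivrMl// -nneseriesZl; last by move=> k _; rewrite lee_fin box_vol_ge0.
pose a' k i := (c i + l * (a k i - c i))%R.
pose b' k i := (c i + l * (b k i - c i))%R.
apply: (le_trans (ereal_inf_lbound _)).
  exists a', b'; split.
  - move=> k i; rewrite /a' /b' lerD2l ler_pM2l// lerD2r; exact: ab.
  - move=> y /= yB.
    pose y' i := (c i + (y i - c i) / l)%R.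
    have : eball c r y'.
      rewrite /eball /= enorm_lt// /y'.
      under eq_bigr do rewrite addrC addKr expr_div_n.
      rewrite -mulr_suml ltr_pdivrMr ?exprn_gt0// -exprMn mulrC.
      by rewrite -enorm_lt// mulr_gt0.
    move=> /cov [k _ hk]; exists k => // i; rewrite /a' /b'.
    have -> : y i = (c i + l * (y' i - c i))%R.
      by rewrite /y' addrAC subrr add0r mulrC divfK ?gt_eqF// addrC subrK.
    have /andP[h1 h2] := hk i.
    by rewrite !lerD2l !ler_pM2l// !lerD2r h1 h2.
  reflexivity.
rewrite le_eqVlt; apply/predU1P; left.
apply: eq_eseriesr => k _; rewrite -EFinM; congr EFin.
rewrite /box_vol (eq_bigr (fun i => l * (b k i - a k i)))%R; last first.
  by move=> i _; rewrite /a' /b'; ring.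
by rewrite big_split /= prodr_const card_ord.
Qed.

End balls.

Lemma claimK (R : realType) (X : completeNormedModType R[i]) (m : nat)
  (F : ('I_m.+1 -> R) -> R -> X) (q rho : R) (c : 'I_m.+1 -> R) (r s : R) :
  0 < q -> 1 < rho -> 0 < r -> r < s ->
  (lebout (eball c r `&` ~` [set x | (r%:E < stop_time q rho F x)%E]) <=
    (powR rho (- q))%:E * lebout (eball c s))%E.
Proof.
move=> q0 rho1 r0 rs.
have rho0 : 0 < rho by apply: lt_trans rho1.
have s0 : 0 < s by apply: lt_trans rs.
set D := _ `&` _.
set Bs := eball c s.
set gfun := fun y => if `[< Bs y >] then poweR (Afun F s y) q else 0%E.
set Tv := poweR ((fine (lebout Bs))^-1%:E * lint gfun)%E q^-1.
have DBs : D `<=` Bs by move=> y [By _]; rewrite /Bs /eball /=; apply: lt_trans rs.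
have RHS0 : (0 <= (powR rho (- q))%:E * lebout Bs)%E.
  by apply: mule_ge0; [rewrite lee_fin powR_ge0|exact: lebout_ge0].
have K1 : forall y, D y -> (rho%:E * Tv < Afun F s y)%E.
  move=> y [By nGy].
  have Bsy : Bs y by exact: DBs.
  have CT : (Tv <= Cq q F y)%E.
    by rewrite /Cq; apply: ereal_sup_ubound; exists c, s; split.
  apply: (le_lt_trans (lee_wpmul2l _ CT)); first by rewrite lee_fin ltW.
  rewrite ltNge; apply/negP => h; apply: nGy => /=.
  apply: (@lt_le_trans _ _ s%:E); first by rewrite lte_fin.
  by rewrite /stop_time; apply: ereal_sup_ubound; exists s.
have [[y0 Dy0]|D0] := pselect (exists y, D y); last first.
  apply: le_trans RHS0; rewrite (_ : D = set0); last first.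
    by apply/seteqP; split => // y Dy; apply: D0; exists y.
  by rewrite lebout_set0 ?lexx//; exact: ord0.
have [t Tvt t0] : exists2 t, Tv = t%:E & 0 <= t.
  have := K1 _ Dy0; have : (0 <= Tv)%E by exact: poweR_ge0.
  case: (Tv) => [t| |]//; first by move=> t0 _; exists t.
  by move=> _; rewrite gt0_muley ?lte_fin// ltNge leey.
have [v Vv v0] : exists2 v, lebout Bs = v%:E & 0 <= v.
  have := lebout_ball_fin ord0 c s s0; have := lebout_ge0 Bs.
  by case: (lebout Bs) => [v| |]// v0 _; exists v.
have [v0E|vpos] := eqVneq v 0.
  apply: (le_trans (le_lebout _ _ DBs)); rewrite Vv v0E.
  by rewrite mule_ge0// lee_fin powR_ge0.
have vp : 0 < v by rewrite lt_neqAle eq_sym vpos v0.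
have Ig0 : (0 <= lint gfun)%E.
  by apply: integral_ge0 => x _; exact: lebout_ge0.
have [i Igi i0] : exists2 i, lint gfun = i%:E & 0 <= i.
  move: Tvt; rewrite /Tv Vv /=; move: Ig0.
  case: (lint gfun) => [i| |]//; first by move=> i0 _; exists i.
  by rewrite gt0_muley ?lte_fin ?invr_gt0 //= invr_eq0 gt_eqF.
have tE : t = (v^-1 * i) `^ q^-1.
  by move: Tvt; rewrite /Tv Vv Igi /= => -[->].
have K2 : forall y, D y -> ((rho `^ q * (v^-1 * i))%:E < gfun y)%E.
  move=> y Dy; have := K1 _ Dy; rewrite Tvt /gfun asboolT; last exact: DBs.
  case: (Afun F s y) => [x| |]/=; [|by move=> _; rewrite gt_eqF// ltey|by rewrite ltNge leNye].
  rewrite -EFinM !lte_fin => hx.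
  have ->: rho `^ q * (v^-1 * i) = (rho * t) `^ q.
    rewrite powRM ?(ltW rho0)// tE -powRrM mulVf ?gt_eqF// powRr1//.
    by rewrite mulr_ge0// invr_ge0.
  have rt0 : 0 <= rho * t by rewrite mulr_ge0// ltW.
  apply: gt0_ltr_powR => //; rewrite ?inE ?nnegrE//.
  exact: le_trans rt0 (ltW hx).
have [i0E|ipos] := eqVneq i 0.
  rewrite i0E in Igi K2.
  apply: (le_trans _ RHS0); rewrite -(lebout_lint0 _ Igi); apply: le_lebout => y Dy.
  by have := K2 y Dy; rewrite !mulr0.
have ip : 0 < i by rewrite lt_neqAle eq_sym ipos i0.
set l := rho `^ q * (v^-1 * i).
have lp : 0 < l by rewrite mulr_gt0 ?powR_gt0// mulr_gt0 ?invr_gt0.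
have := @lebout_cheb _ _ gfun _ lp; rewrite Igi -lee_pdivlMl// => h.
apply: le_trans (le_lebout _ _ K2) _; apply: le_trans h _.
rewrite Vv -EFinM lee_fin powRN /l le_eqVlt; apply/orP; left; apply/eqP.
field; rewrite ?gt_eqF ?powR_gt0//.
Qed.

Theorem lemma4p6 (R : realType) (X : completeNormedModType R[i]) (n : nat)
  (F : ('I_n -> R) -> R -> X) (q rho : R) :
  strongly_meas F -> 0 < q -> 1 < rho ->
  forall (c : 'I_n -> R) (r : R), 0 < r ->
  (((1 - powR rho (- q))%:E * lebout (eball c r)) <=
    lebout (eball c r `&` [set x | (r%:E < stop_time q rho F x)%E]))%E.
Proof.
move=> _ q0 rho1 c r r0.
case: n F c => [|m] F c; first by rewrite [X in (_ <= X)%E]lebout_I0 leey.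
have rho0 : 0 < rho by apply: lt_trans rho1.
set a := powR rho (- q).
have a0 : 0 <= a by exact: powR_ge0.
set B := eball c r.
set G := [set x | (r%:E < stop_time q rho F x)%E].
set D := B `&` ~` G.
have [l Bl l0] : exists2 l, lebout B = l%:E & 0 <= l.
  have := lebout_ball_fin ord0 c r r0; have := lebout_ge0 B.
  by case: (lebout B) => [l| |]// l0 _; exists l.
have sub : (lebout B <= lebout (B `&` G) + lebout D)%E.
  apply: le_trans (lebout_subU ord0 _ _).
  apply: le_lebout => x Bx; have [Gx|nGx] := pselect (G x); [left|right]; by split.
have := lebout_ge0 (B `&` G).
case BGM: (lebout (B `&` G)) => [M| |] //; last by move=> _; rewrite leey.
move=> _.
rewrite Bl -EFinM lee_fin.
have key : forall t, 1 < t -> l <= M + a * (t ^+ m.+1 * l).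
  move=> t t1; have t0 : 0 < t by apply: lt_trans t1.
  have sub' := sub; rewrite Bl BGM in sub'.
  rewrite -lee_fin; apply: (le_trans sub').
  rewrite EFinD leeD2l//.
  have trr : r < t * r by rewrite ltr_pMl.
  apply: (le_trans (@claimK _ _ _ F q rho c r (t * r) q0 rho1 r0 trr)).
  rewrite EFinM; apply: lee_wpmul2l; first by rewrite lee_fin.
  by rewrite EFinM -Bl; exact: lebout_ball_scale.
apply/ler_addgt0Pr => e e0.
set eta := e / (a * l + 1).
have al0 : 0 <= a * l by rewrite mulr_ge0.
have eta0 : 0 < eta by rewrite divr_gt0// ltr_wpDl.
pose t := (1 + eta) `^ (m.+1%:R^-1).
have tn : t ^+ m.+1 = 1 + eta.
  rewrite -powR_mulrn ?powR_ge0// -powRrM mulVf ?pnatr_eq0// powRr1//.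
  by rewrite addr_ge0// ltW.
have t1 : 1 < t.
  rewrite ltNge; apply/negP => t1.
  have := exprn_ile1 m.+1 (powR_ge0 _ _) t1; rewrite -/t tn.
  by rewrite gerDl leNgt eta0.
have := key t t1; rewrite tn => h.
have etaE : eta * (a * l + 1) = e by rewrite /eta divfK// gt_eqF// ltr_wpDl.
nra.
Qed.
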